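(* Suppose the filtered vector space $(V,\ell)$ satisfies the best approximation property. Then $V$ has a basis which is $\ell$-orthogonal. Moreover, if $W\le V$ is a subspace and $S$ is an $\ell$-orthogonal basis of $W$, then there is an $\ell$-orthogonal basis of $V$ containing $S$.
   Context: A filtered vector space over a field $\kappa$ is a pair $(V,\ell)$ with $V$ a $\kappa$-vector space and $\ell\colon V\to\mathbb{R}\cup\{-\infty\}$ such that $\ell(v)=-\infty$ iff $v=0$, $\ell(cv)=\ell(v)$ for $c\in\kappa\setminus\{0\}$, and $\ell(v+w)\le\max\{\ell(v),\ell(w)\}$. A subset $S\subset V\setminus\{0\}$ is $\ell$-orthogonal if $\ell(\sum_{i=1}^n c_iv_i)=\max\{\ell(v_i):c_i\neq0\}$ for all finitely many distinct $v_1,\dots,v_n\in S$ and $c_i\in\kappa$. $(V,\ell)$ satisfies the best approximation property if for every proper subspace $W\subsetneq V$ and every $v\in V\setminus W$ there is $w_0\in W$ with $\ell(v-w_0)\le\ell(v-w)$ for all $w\in W$. *)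

(* Defs.v *)
(* K a field, V a (possibly infinite-dimensional) K-vector
   space (lmodType K), values of the filtration in \bar R = R U {-oo,+oo}
   for R : realType, with +oo excluded by hypothesis. *)
From HB Require Import structures.
From mathcomp Require Import all_boot all_order all_algebra.
From mathcomp Require Import reals constructive_ereal.
Set Implicit Arguments. Unset Strict Implicit. Unset Printing Implicit Defensive.
Import Order.TTheory GRing.Theory Num.Theory.
Local Open Scope ring_scope.

Section FilteredVS.
Variables (K : fieldType) (R : realType) (V : lmodType K).

Definition filtered (l : V -> \bar R) : Prop :=
  [/\ (forall v, l v <> +oo%E),
      (forall v, l v = -oo%E <-> v = 0%R),
      (forall (c : K) v, c != 0 -> l (c *: v)%R = l v) &
      (forall v w, (l (v + w)%R <= maxe (l v) (l w))%E)].

Definition subspace (W : V -> Prop) : Prop :=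
  W 0%R /\ forall (a : K) u v, W u -> W v -> W (a *: u + v)%R.

Definition lincomb (s : seq V) (c : nat -> K) : V :=
  (\sum_(i < size s) c i *: s`_i)%R.

Definition in_span (S : V -> Prop) (v : V) : Prop :=
  exists (s : seq V) (c : nat -> K), (forall x, x \in s -> S x) /\ v = lincomb s c.

Definition lin_indep (S : V -> Prop) : Prop :=
  forall (s : seq V) (c : nat -> K), uniq s -> (forall x, x \in s -> S x) ->
    lincomb s c = 0%R -> forall i, (i < size s)%N -> c i = 0%R.

Definition basis_in (W : V -> Prop) (S : V -> Prop) : Prop :=
  (forall x, S x -> W x) /\ lin_indep S /\ (forall w, W w -> in_span S w).

Definition l_orthogonal (l : V -> \bar R) (S : V -> Prop) : Prop :=
  (forall x, S x -> x <> 0%R) /\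
  forall (s : seq V) (c : nat -> K), uniq s -> (forall x, x \in s -> S x) ->
    l (lincomb s c) = \big[maxe/-oo%E]_(i < size s | c i != 0%R) l s`_i.

Definition best_approx (l : V -> \bar R) : Prop :=
  forall (W : V -> Prop), subspace W -> (exists v, ~ W v) ->
    forall v, ~ W v -> exists2 w0, W w0 & forall w, W w -> (l (v - w0)%R <= l (v - w)%R)%E.

End FilteredVS.

(* Main.v *)
Require Import Defs.
From HB Require Import structures.
From mathcomp Require Import all_boot all_order all_algebra.
From mathcomp Require Import reals constructive_ereal.
From mathcomp Require Import boolp classical_sets.
Import Order.TTheory GRing.Theory Num.Theory.
Local Open Scope ring_scope.
Set Implicit Arguments. Unset Strict Implicit.

Section Aux.
Variables (K : fieldType) (R : realType) (V : lmodType K) (l : V -> \bar R).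
Hypothesis hl : filtered l.

Definition SUM (t : seq (V * K)) : V := \sum_(p <- t) p.2 *: p.1.
Definition BM (t : seq (V * K)) : \bar R := \big[maxe/-oo%E]_(p <- t | p.2 != 0) l p.1.
Definition tmap (s : seq V) (c : nat -> K) : seq (V * K) :=
  map (fun i => (s`_i, c i)) (iota 0 (size s)).

Lemma lincombE s c : lincomb s c = SUM (tmap s c).
Proof.
by rewrite /lincomb /SUM /tmap big_map -(subn0 (size s)) -/(index_iota 0 _) big_mkord subn0.
Qed.

Lemma bigmaxE s (c : nat -> K) : \big[maxe/-oo%E]_(i < size s | c i != 0) l s`_i = BM (tmap s c).
Proof.
by rewrite /BM /tmap big_map -(subn0 (size s)) -/(index_iota 0 _) big_mkord subn0.
Qed.

Lemma unzip1_tmap s c : unzip1 (tmap s c) = s.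
Proof. by rewrite /tmap /unzip1 -map_comp -[RHS](mkseq_nth 0). Qed.

Lemma tmap_unzip t : tmap (unzip1 t) (fun i => (unzip2 t)`_i) = t.
Proof.
apply: (@eq_from_nth _ (0, 0)); first by rewrite /tmap size_map size_iota size_map.
move=> i; rewrite /tmap size_map size_iota size_map => hi.
rewrite (nth_map 0) ?size_iota ?size_map // nth_iota // add0n.
rewrite (nth_map (0,0)) // (nth_map (0,0)) //.
by case: (nth _ t i).
Qed.


Definition orthP (X : V -> Prop) := (forall x, X x -> x <> 0) /\
  forall t, uniq (unzip1 t) -> (forall p, p \in t -> X p.1) -> l (SUM t) = BM t.

Lemma orthE X : l_orthogonal l X <-> orthP X.
Proof.
split=> -[nz H]; split=> //.
  move=> t ut tX; rewrite -(tmap_unzip t) -lincombE -bigmaxE; apply: H => //.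
  by move=> x /mapP [p pt ->]; apply: tX.
move=> s c us sX; rewrite lincombE bigmaxE; apply: H; first by rewrite unzip1_tmap.
move=> p pt; apply: sX; rewrite -(unzip1_tmap s c); exact: map_f.
Qed.

Definition pspan (X : V -> Prop) v := exists t, (forall p, p \in t -> X p.1) /\ v = SUM t.

Lemma pspan_in X v : pspan X v -> in_span X v.
Proof.
move=> [t [tX ->]]; exists (unzip1 t), (fun i => (unzip2 t)`_i); split.
  by move=> x /mapP [p pt ->]; apply: tX.
by rewrite lincombE tmap_unzip.
Qed.

Lemma pspan_sub X : subspace (pspan X).
Proof.
split; first by exists [::]; split=> //; rewrite /SUM big_nil.
move=> a u v [t1 [t1X ->]] [t2 [t2X ->]].
exists (map (fun p => (p.1, a * p.2)) t1 ++ t2); split.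
  move=> p; rewrite mem_cat => /orP [|pt]; last exact: t2X.
  by move=> /mapP [q qt ->] /=; exact: (t1X q qt).
rewrite /SUM big_cat big_map /= scaler_sumr; congr (_ + _).
by apply: eq_bigr => p _; rewrite scalerA.
Qed.

Lemma pspan_mem X x : X x -> pspan X x.
Proof.
move=> Xx; exists [:: (x, 1)]; split; first by move=> p; rewrite inE => /eqP ->.
by rewrite /SUM big_cons big_nil scale1r addr0.
Qed.

Lemma l0 : l 0 = -oo%E.
Proof. by case: hl => _ h _ _; apply/h. Qed.

Lemma l_eq0 v : l v = -oo%E -> v = 0.
Proof. by case: hl => _ h _ _; move/h. Qed.

Lemma lZ (c : K) v : c != 0 -> l (c *: v) = l v.
Proof. by case: hl => _ _ h _; apply: h. Qed.

Lemma lN v : l (- v) = l v.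
Proof. by rewrite -scaleN1r lZ // oppr_eq0 oner_eq0. Qed.

Lemma lD v w : (l (v + w) <= maxe (l v) (l w))%E.
Proof. by case: hl => _ _ _ h; apply: h. Qed.


Section Key.
Variables (X : V -> Prop) (u : V).
Hypothesis uX : ~ pspan X u.
Hypothesis umin : forall x, pspan X x -> (l u <= l (u + x))%E.

Lemma lmax1 x : pspan X x -> l (u + x) = maxe (l u) (l x).
Proof.
move=> Wx; apply/le_anti; rewrite lD /= ge_max umin //=.
rewrite -{1}(addKr u x); apply: le_trans (lD _ _) _; rewrite lN ge_max lexx umin //.
Qed.

Lemma lmax (c : K) x : pspan X x -> c != 0 -> l (c *: u + x) = maxe (l u) (l x).
Proof.
move=> Wx c0.
have -> : c *: u + x = c *: (u + c^-1 *: x) by rewrite scalerDr scalerA divff // scale1r.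
rewrite lZ // lmax1 ?lZ ?invr_eq0 //.
have [_ h] := pspan_sub X; rewrite -[_ *: x]addr0; apply: h => //.
by have [] := pspan_sub X.
Qed.

Lemma key : orthP X -> orthP (fun y => X y \/ y = u).
Proof.
move=> [nz oX]; split.
  move=> y [/nz //|-> u0]; apply: uX; rewrite u0; by have [] := pspan_sub X.
move=> t ut tX.
have [ut1|nut1] := boolP (u \in unzip1 t); last first.
  apply: oX => // p pt; case: (tX p pt) => // pu.
  by case/negP: nut1; rewrite -pu; apply: map_f.
case/mapP: ut1 => p pt up.
have hperm := perm_to_rem pt.
have hperm1 : perm_eq (unzip1 t) (p.1 :: unzip1 (rem p t)) := perm_map _ hperm.
have := ut; rewrite (perm_uniq hperm1) /= => /andP [nu1 ut'].
have t'X : forall q, q \in rem p t -> X q.1.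
  move=> q qt; case: (tX q (mem_rem qt)) => // qu.
  by case/negP: nu1; rewrite -up -qu; apply: map_f.
have Wt' : pspan X (SUM (rem p t)) by exists (rem p t).
rewrite /SUM /BM (perm_big _ hperm) (perm_big _ hperm) !big_cons -/(SUM _) -/(BM _).
case: ifP => p20.
  by rewrite -up lmax // oX.
by move/negbFE/eqP: p20 => ->; rewrite /= scale0r add0r oX.
Qed.

End Key.


Lemma orth_mono (Y Z : V -> Prop) : (forall x, Y x -> Z x) -> orthP Z -> orthP Y.
Proof.
move=> YZ [nz oZ]; split; first by move=> x /YZ /nz.
by move=> t ut tY; apply: oZ => // p /tY /YZ.
Qed.

Lemma orth_indep X : l_orthogonal l X -> lin_indep X.
Proof.
move=> [nz oX] s c us sX hs i lti; apply/eqP; apply/negPn/negP => ci.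
have h := oX s c us sX; rewrite hs l0 in h.
have := @le_bigmax_cond _ _ _ (-oo%E) (Ordinal lti) (fun j : 'I_(size s) => c j != 0) (fun j : 'I_(size s) => l s`_j) ci.
rewrite -h /= leeNy_eq => /eqP /l_eq0; apply: nz; apply: sX; exact: mem_nth.
Qed.

Hypothesis hb : best_approx l.

Lemma ext (S : V -> Prop) : orthP S ->
  exists T, orthP T /\ (forall v, pspan T v) /\ (forall x, S x -> T x).
Proof.
move=> oS.
pose P := fun A : set V => orthP (fun x => S x \/ A x).
have [A [PA maxA]] : exists A : set V, P A /\ (forall B : set V, (A `<` B)%classic -> ~ P B).
  apply: Zorn_bigcup => F FP Ftot.
  have claim : forall t : seq (V * K),
      (forall p, p \in t -> S p.1 \/ (\bigcup_(X in F) X)%classic p.1) ->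
      exists X : set V, (X = set0 \/ F X) /\ forall p, p \in t -> S p.1 \/ X p.1.
    elim=> [|q t IH] tX.
      by exists set0; split; [left|].
    have [X [XF Xt]] : exists X : set V, (X = set0 \/ F X) /\ forall p, p \in t -> S p.1 \/ X p.1.
      by apply: IH => p pt; apply: tX; rewrite inE pt orbT.
    case: (tX q (mem_head _ _)) => [Sq|[Y FY Yq]].
      exists X; split=> // p; rewrite inE => /orP [/eqP -> | /Xt //]; by left.
    case: XF => [X0|FX].
      exists Y; split; [by right|] => p; rewrite inE => /orP [/eqP -> | /Xt []]; [by right|by left|].
      by rewrite X0.
    case: (Ftot X Y FX FY) => XY.
      exists Y; split; [by right|] => p; rewrite inE => /orP [/eqP -> | /Xt []]; [by right|by left|].
      by move/XY; right.
    exists X; split; [by right|] => p; rewrite inE => /orP [/eqP -> | /Xt //]; by right; apply: XY.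
  split.
    move=> x [Sx|[X FX Xx]]; first exact: oS.1.
    by have [nz _] := FP X FX; apply: nz; right.
  move=> t ut tX.
  have [X [XF Xt]] := claim t tX.
  have PX : P X.
    case: XF => [->|/FP //]; apply: orth_mono oS => x [//|//].
  exact: PX.2.
pose T := fun x => S x \/ A x.
exists T; split=> //; split; last by move=> x Sx; left.
move=> v; case: (pselect (pspan T v)) => // nv.
have [w0 Ww0 minw] := hb (pspan_sub T) (ex_intro _ v nv) nv.
pose u := v - w0.
have [_ Wcl] := pspan_sub T.
have umin : forall x, pspan T x -> (l u <= l (u + x))%E.
  move=> x Wx; have := minw (w0 - x) _.
  have -> : v - (w0 - x) = u + x by rewrite /u opprB addrA addrAC.
  apply.
  by rewrite -scaleN1r addrC; apply: Wcl.
have uX : ~ pspan T u.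
  move=> Wu; apply: nv.
  have -> : v = 1 *: u + w0 by rewrite scale1r subrK.
  exact: Wcl.
have oTu := key uX umin PA.
exfalso; apply: (maxA (fun y => A y \/ y = u)).
  split; first by move=> y Ay; left.
  move=> /(_ u (or_intror erefl)) Au; apply: uX; apply: pspan_mem; by right.
apply: orth_mono oTu => x [Sx|[Ax|xu]]; [by left; left|by left; right|by right].
Qed.

End Aux.

Theorem proposition3p7 (K : fieldType) (R : realType) (V : lmodType K)
  (l : V -> \bar R) :
  filtered l -> best_approx l ->
  (exists S : V -> Prop, basis_in (fun _ => True) S /\ l_orthogonal l S) /\
  (forall (W S : V -> Prop), subspace W -> basis_in W S -> l_orthogonal l S ->
     exists T : V -> Prop,
       basis_in (fun _ => True) T /\ l_orthogonal l T /\ (forall x, S x -> T x)).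
Proof.
move=> hl hb.
have part2 : forall (W S : V -> Prop), subspace W -> basis_in W S -> l_orthogonal l S ->
     exists T : V -> Prop,
       basis_in (fun _ => True) T /\ l_orthogonal l T /\ (forall x, S x -> T x).
  move=> W S _ _ /orthE oS.
  have [T [oT [spT ST]]] := ext hl hb oS.
  have oT' : l_orthogonal l T by apply/orthE.
  exists T; split; last by split.
  split; first by [].
  split; first by apply: (orth_indep hl).
  by move=> w _; apply: pspan_in.
split=> //.
have [|||T [bT [oT _]]] := part2 (fun v => v = 0) (fun _ => False).
- by split=> // a u v -> ->; rewrite scaler0 addr0.
- split=> //; split.
    by case=> [|x s] c _ sX //; have := sX x (mem_head _ _).
  by move=> w ->; exists [::], (fun _ => 0); rewrite /lincomb big_ord0.
- split=> //; case=> [|x s] c _ sX.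
    by rewrite /lincomb !big_ord0 l0.
  by have := sX x (mem_head _ _).
by exists T.
Qed.
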